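(* Let $(V,P)$ be an irreducible, reversible Markov process on a finite state space $V$ with stationary distribution $\pi$. Let $\xi\in\mathbb{R}^V$ with $\sum_{v\in V}\xi_v=0$, let $D=\mathrm{diag}(\pi)$ and $\widetilde{\xi}=D^{-1/2}\xi$. Then: (1) for every integer $t\geq 1$, $R_{\mathrm{eff}}(P;\xi)\leq t\cdot R_{\mathrm{eff}}(P^t;\xi)$; (2) if $\delta$ is the spectral gap of $P$, then $R_{\mathrm{eff}}(P;\xi)\leq \|\widetilde{\xi}\|_2^2/\delta$.
   Context: A Markov process $(V,P)$ has a row-stochastic transition matrix $P\in\mathbb{R}_{\ge 0}^{V\times V}$; it is irreducible if for all $v,w$ some power $P^t$ has $(P^t)_{vw}>0$ (then its stationary distribution $\pi=\pi P$ is unique and positive), and a process $Q$ is reversible with respect to $\pi$ if $\pi_vQ_{vw}=\pi_wQ_{wv}$ for all $v,w$ (if $P$ is, so is $P^t$). For a process $Q$ reversible with respect to $\pi$, associate the undirected graph on $V$ with an edge $\{v,w\}$ whenever $Q_{vw}>0$, with resistance $r_{\{v,w\}}=1/(\pi_vQ_{vw})$; each edge gets an arbitrary orientation. A flow is $f:E\to\mathbb{R}$ with net-flow $\delta_f(v)=\sum_{e\text{ out of }v}f_e-\sum_{e\text{ into }v}f_e$ and energy $\sum_e r_ef_e^2$. $R_{\mathrm{eff}}(Q;\xi)$ is the minimum energy of a flow with net-flow $\xi$ in this graph (taken to be $+\infty$ if no such flow exists). The spectral gap of $P$ is $\delta=1-\max\{\lambda:\lambda\text{ an eigenvalue of }P,\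 \lambda<1\}$, i.e. every eigenvalue $\lambda<1$ of $P$ satisfies $\lambda\le 1-\delta$. *)

(* Defs.v *)
From HB Require Import structures.
From mathcomp Require Import all_boot all_order all_algebra.
From mathcomp Require Import boolp classical_sets reals constructive_ereal ereal.
Set Implicit Arguments. Unset Strict Implicit. Unset Printing Implicit Defensive.
Import Order.TTheory GRing.Theory Num.Theory.
Local Open Scope ring_scope.
Local Open Scope classical_set_scope.

Section Markov.
Variables (R : realType) (n : nat).
Implicit Types (P Q : 'M[R]_n) (pi xi : 'I_n -> R).

Definition row_stochastic P :=
  (forall v w, 0 <= P v w) /\ (forall v, \sum_w P v w = 1).

Definition irreducible P := forall v w, exists t : nat, 0 < (P ^+ t) v w.

Definition stationary_distribution P pi :=
  (forall v, 0 <= pi v) /\ \sum_v pi v = 1 /\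
  (forall w, \sum_v pi v * P v w = pi w).

Definition reversible P pi := forall v w, pi v * P v w = pi w * P w v.

(* The undirected graph of Q: an edge {v,w} whenever Q v w > 0.  Each edge
   {v,w} is oriented from the smaller index v to the larger w (v <= w; loops
   allowed), so oriented edges are pairs (v,w) with v <= w and 0 < Q v w. *)
Definition is_edge Q (v w : 'I_n) : bool := (v <= w)%N && (0 < Q v w).

(* A flow is a real function on oriented edges; we represent it as a function
   on pairs which vanishes off the edge set. *)
Definition is_flow Q (f : 'I_n -> 'I_n -> R) :=
  forall v w, ~~ is_edge Q v w -> f v w = 0.

Definition net_flow (f : 'I_n -> 'I_n -> R) (v : 'I_n) : R :=
  \sum_w f v w - \sum_u f u v.

Definition resistance Q pi (v w : 'I_n) : R := (pi v * Q v w)^-1.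

Definition energy Q pi (f : 'I_n -> 'I_n -> R) : R :=
  \sum_v \sum_w (if is_edge Q v w then resistance Q pi v w * f v w ^+ 2 else 0).

(* Effective resistance: the minimum (infimum, which is attained) energy of
   a flow with net-flow xi; +oo if there is no such flow. *)
Definition Reff Q pi xi : \bar R :=
  ereal_inf [set (energy Q pi f)%:E | f in
     [set f | is_flow Q f /\ forall v, net_flow f v = xi v]].

Definition spectral_gap P (delta : R) :=
  (exists lam, eigenvalue P lam /\ lam < 1 /\ lam = 1 - delta) /\
  (forall lam, eigenvalue P lam -> lam < 1 -> lam <= 1 - delta).

End Markov.

(* Main.v *)
Require Import Defs.
From HB Require Import structures.
From mathcomp Require Import all_boot all_order all_algebra.
From mathcomp Require Import boolp classical_sets reals constructive_ereal ereal.
From mathcomp Require Import complex.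
From mathcomp Require Import ring lra zify.
Import Order.TTheory GRing.Theory Num.Theory.
Local Open Scope ring_scope.
Set Implicit Arguments. Unset Strict Implicit. Unset Printing Implicit Defensive.

Section Basic.
Variables (R : realType) (n : nat).
Implicit Types (Q : 'M[R]_n) (pi a b : 'I_n -> R).

Definition ip pi a b := \sum_v pi v * a v * b v.
Definition Pop Q a := fun v => \sum_w Q v w * a w.
Definition Ef Q pi a := ip pi a a - ip pi a (Pop Q a).

Lemma ip_sym pi a b : ip pi a b = ip pi b a.
Proof. by apply: eq_bigr => v _; rewrite -mulrA mulrC -mulrA (mulrC (b v)) mulrA mulrC mulrA. Qed.

Lemma ip_selfadj Q pi a b : reversible Q pi ->
  ip pi (Pop Q a) b = ip pi a (Pop Q b).
Proof.
move=> rev; rewrite /ip /Pop.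
transitivity (\sum_v \sum_w pi v * Q v w * a w * b v).
  by apply: eq_bigr => v _; rewrite mulr_sumr mulr_suml; apply: eq_bigr => w _; ring.
rewrite exchange_big /=; apply: eq_bigr => w _; rewrite mulr_sumr; apply: eq_bigr => v _.
by rewrite rev; ring.
Qed.

Lemma sum_piQ_l Q pi a : (forall v, \sum_w Q v w = 1) ->
  \sum_v \sum_w pi v * Q v w * a v = \sum_v pi v * a v.
Proof.
move=> st; apply: eq_bigr => v _.
by rewrite -mulr_suml -mulr_sumr st mulr1.
Qed.

Lemma sum_piQ_r Q pi a : (forall v, \sum_w Q v w = 1) -> reversible Q pi ->
  \sum_v \sum_w pi v * Q v w * a w = \sum_v pi v * a v.
Proof.
move=> st rev; rewrite exchange_big /= -(sum_piQ_l pi a st).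
apply: eq_bigr => w _; apply: eq_bigr => v _; by rewrite rev.
Qed.

Lemma sum_piQ_m Q pi a b :
  \sum_v \sum_w pi v * Q v w * a v * b w = ip pi a (Pop Q b).
Proof.
rewrite /ip /Pop; apply: eq_bigr => v _; rewrite mulr_sumr; apply: eq_bigr => w _; ring.
Qed.

Lemma dirichlet Q pi a : (forall v, \sum_w Q v w = 1) -> reversible Q pi ->
  \sum_v \sum_w pi v * Q v w * (a v - a w) ^+ 2 = 2 * Ef Q pi a.
Proof.
move=> st rev.
transitivity (\sum_v \sum_w pi v * Q v w * (a v * a v)
   + \sum_v \sum_w pi v * Q v w * (a w * a w)
   - 2 * \sum_v \sum_w pi v * Q v w * a v * a w).
  rewrite mulr_sumr -!big_split /= -sumrN -big_split /=; apply: eq_bigr => v _.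
  rewrite mulr_sumr -!big_split /= -sumrN -big_split /=; apply: eq_bigr => w _.
  ring.
rewrite (sum_piQ_l pi (fun v => a v * a v) st) (sum_piQ_r (fun v => a v * a v) st rev).
rewrite sum_piQ_m /Ef /ip.
have -> : \sum_v pi v * (a v * a v) = \sum_v pi v * a v * a v.
  by apply: eq_bigr => v _; ring.
ring.
Qed.

Lemma dirichlet_plus Q pi a : (forall v, \sum_w Q v w = 1) -> reversible Q pi ->
  \sum_v \sum_w pi v * Q v w * (a v + a w) ^+ 2 = 2 * (ip pi a a + ip pi a (Pop Q a)).
Proof.
move=> st rev.
transitivity (\sum_v \sum_w pi v * Q v w * (a v * a v)
   + \sum_v \sum_w pi v * Q v w * (a w * a w)
   + 2 * \sum_v \sum_w pi v * Q v w * a v * a w).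
  rewrite mulr_sumr -!big_split /=; apply: eq_bigr => v _.
  rewrite mulr_sumr -!big_split /=; apply: eq_bigr => w _.
  ring.
rewrite (sum_piQ_l pi (fun v => a v * a v) st) (sum_piQ_r (fun v => a v * a v) st rev).
rewrite sum_piQ_m /ip.
have -> : \sum_v pi v * (a v * a v) = \sum_v pi v * a v * a v.
  by apply: eq_bigr => v _; ring.
ring.
Qed.

End Basic.

Section Pow.
Variables (R : realType) (n : nat) (P : 'M[R]_n) (pi : 'I_n -> R).
Hypothesis Pge0 : forall v w, 0 <= P v w.
Hypothesis Pst : forall v, \sum_w P v w = 1.
Hypothesis Prev : reversible P pi.
Hypothesis pi_gt0 : forall v, 0 < pi v.

Definition dlt (w : 'I_n) : 'I_n -> R := fun u => (u == w)%:R.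

Lemma Pop_dlt (Q : 'M[R]_n) v w : Pop Q (dlt w) v = Q v w.
Proof.
rewrite /Pop /dlt (bigD1 w) //= eqxx mulr1 big1 ?addr0 // => u /negbTE ->.
by rewrite mulr0.
Qed.

Lemma ip_dlt v b : ip pi (dlt v) b = pi v * b v.
Proof.
rewrite /ip /dlt (bigD1 v) //= eqxx mulr1 big1 ?addr0 // => u /negbTE ->.
by rewrite mulr0 mul0r.
Qed.

Lemma Pop_mul (A B : 'M[R]_n) a : Pop (A * B) a = Pop A (Pop B a).
Proof.
apply: funext => v; rewrite /Pop.
under eq_bigr => w _ do rewrite -mulmxE mxE mulr_suml.
rewrite exchange_big /=; apply: eq_bigr => k _.
by rewrite mulr_sumr; apply: eq_bigr => w _; rewrite mulrA.
Qed.

Lemma Pop_one a : Pop (1 : 'M[R]_n) a = a.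
Proof.
apply: funext => v; rewrite /Pop (bigD1 v) //= big1 ?addr0.
  by rewrite mxE eqxx mul1r.
by move=> u /negbTE uv; rewrite mxE eq_sym uv mul0r.
Qed.

Definition It t a := iter t (Pop P) a.

Lemma PopX t a : Pop (P ^+ t) a = It t a.
Proof.
elim: t a => [|t IH] a /=; first by rewrite expr0 Pop_one.
by rewrite exprS Pop_mul IH.
Qed.

Lemma PopX_entry t v w : (P ^+ t) v w = It t (dlt w) v.
Proof. by rewrite -PopX Pop_dlt. Qed.

Lemma Pop_ge0 a : (forall v, 0 <= a v) -> forall v, 0 <= Pop P a v.
Proof. by move=> a0 v; apply: sumr_ge0 => w _; apply: mulr_ge0. Qed.

Lemma It_ge0 t a : (forall v, 0 <= a v) -> forall v, 0 <= It t a v.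
Proof. elim: t => [//|t IH] a0 /=; exact/Pop_ge0/IH. Qed.

Lemma It_one t : It t (fun _ => 1) = (fun _ => 1).
Proof.
elim: t => [//|t IH] /=; rewrite IH; apply: funext => v.
by rewrite /Pop; under eq_bigr => w _ do rewrite mulr1.
Qed.

Lemma ip_It t a b : ip pi (It t a) b = ip pi a (It t b).
Proof.
rewrite /It; elim: t a b => [//|t IH] a b /=.
by rewrite (ip_selfadj _ _ Prev) IH -iterSr.
Qed.

Lemma PX_ge0 t v w : 0 <= (P ^+ t) v w.
Proof. by rewrite PopX_entry; apply: It_ge0 => u; rewrite /dlt ler0n. Qed.

Lemma PX_st t v : \sum_w (P ^+ t) v w = 1.
Proof.
have := congr1 (fun f => f v) (It_one t); rewrite -PopX /Pop /= => <-.
by apply: eq_bigr => w _; rewrite mulr1.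
Qed.

Lemma PX_rev t : reversible (P ^+ t) pi.
Proof.
move=> v w; rewrite !PopX_entry -!ip_dlt -ip_It; exact: ip_sym.
Qed.

End Pow.

Section Lin.
Variables (R : realType) (n : nat).
Implicit Types (Q : 'M[R]_n) (pi a b c : 'I_n -> R).

Lemma ipBl pi a b c : ip pi (fun v => a v - b v) c = ip pi a c - ip pi b c.
Proof. rewrite /ip -sumrB; apply: eq_bigr => v _; ring. Qed.
Lemma ipBr pi a b c : ip pi c (fun v => a v - b v) = ip pi c a - ip pi c b.
Proof. rewrite /ip -sumrB; apply: eq_bigr => v _; ring. Qed.
Lemma ipZl pi k a c : ip pi (fun v => k * a v) c = k * ip pi a c.
Proof. rewrite /ip mulr_sumr; apply: eq_bigr => v _; ring. Qed.
Lemma ipZr pi k a c : ip pi c (fun v => k * a v) = k * ip pi c a.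
Proof. rewrite /ip mulr_sumr; apply: eq_bigr => v _; ring. Qed.
Lemma PopB Q a b : Pop Q (fun v => a v - b v) = fun v => Pop Q a v - Pop Q b v.
Proof. apply: funext => v; rewrite /Pop -sumrB; apply: eq_bigr => w _; ring. Qed.
Lemma PopZ Q k a : Pop Q (fun v => k * a v) = fun v => k * Pop Q a v.
Proof. apply: funext => v; rewrite /Pop mulr_sumr; apply: eq_bigr => w _; ring. Qed.
Lemma ip_ge0 pi a : (forall v, 0 <= pi v) -> 0 <= ip pi a a.
Proof. by move=> h; apply: sumr_ge0 => v _; rewrite -mulrA mulr_ge0 // -expr2 sqr_ge0. Qed.
End Lin.

Section Ebounds.
Variables (R : realType) (n : nat) (P : 'M[R]_n) (pi : 'I_n -> R).
Hypothesis Pge0 : forall v w, 0 <= P v w.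
Hypothesis Pst : forall v, \sum_w P v w = 1.
Hypothesis Prev : reversible P pi.
Hypothesis pi_gt0 : forall v, 0 < pi v.

Let pi_ge0 v : 0 <= pi v. Proof. exact: ltW. Qed.

Lemma dsum_ge0 (F : 'I_n -> 'I_n -> R) :
  (forall v w, 0 <= F v w) -> 0 <= \sum_v \sum_w pi v * P v w * F v w.
Proof.
move=> h; apply: sumr_ge0 => v _; apply: sumr_ge0 => w _.
by rewrite mulr_ge0 // mulr_ge0.
Qed.

Lemma Ef_ge0 a : 0 <= Ef P pi a.
Proof.
have := @dsum_ge0 (fun v w => (a v - a w) ^+ 2) (fun v w => sqr_ge0 _).
rewrite dirichlet //; lra.
Qed.

Lemma plus_ge0 a : 0 <= ip pi a a + ip pi a (Pop P a).
Proof.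
have := @dsum_ge0 (fun v w => (a v + a w) ^+ 2) (fun v w => sqr_ge0 _).
rewrite dirichlet_plus //; lra.
Qed.

Lemma sa a b : ip pi (Pop P a) b = ip pi a (Pop P b).
Proof. exact: ip_selfadj. Qed.

Lemma Ef_P a : Ef P pi (Pop P a) <= Ef P pi a.
Proof.
set u := fun v => a v - Pop P a v.
have h1 := plus_ge0 u.
rewrite /u PopB !ipBl !ipBr in h1.
rewrite /Ef.
have e1 : ip pi a (Pop P (Pop P a)) = ip pi (Pop P a) (Pop P a) by rewrite sa.
have e2 : ip pi (Pop P a) a = ip pi a (Pop P a) by rewrite ip_sym.
have e3 : ip pi (Pop P (Pop P a)) a = ip pi a (Pop P (Pop P a)) by rewrite ip_sym.
have e4 : ip pi (Pop P (Pop P a)) (Pop P a) = ip pi (Pop P a) (Pop P (Pop P a)) by rewrite ip_sym.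
lra.
Qed.

Lemma Ef_It k a : Ef P pi (It P k a) <= Ef P pi a.
Proof.
elim: k a => [|k IH] a; first by [].
rewrite /It iterSr; apply: le_trans (IH _) _; exact: Ef_P.
Qed.

Lemma Dd_le s a : ip pi a (It P s a) - ip pi a (It P s.+1 a) <= Ef P pi a.
Proof.
suff: forall a, (ip pi a (It P s a) - ip pi a (It P s.+1 a) <= Ef P pi a) /\
                (ip pi a (It P s.+1 a) - ip pi a (It P s.+2 a) <= Ef P pi a).
  by move=> /(_ a) [].
elim: s => [|s IH] {}a.
  split; first by rewrite /Ef /It /=; lra.
  have h := ip_ge0 (fun v => a v - Pop P a v) pi_ge0.
  rewrite !ipBl !ipBr in h.
  rewrite /Ef /It /=.
  have e1 : ip pi a (Pop P (Pop P a)) = ip pi (Pop P a) (Pop P a) by rewrite sa.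
  have e2 : ip pi (Pop P a) a = ip pi a (Pop P a) by rewrite ip_sym.
  lra.
split; first by case: (IH a).
have -> : ip pi a (It P s.+2 a) = ip pi (Pop P a) (It P s (Pop P a)).
  by rewrite /It iterS -sa -iterSr.
have -> : ip pi a (It P s.+3 a) = ip pi (Pop P a) (It P s.+1 (Pop P a)).
  by rewrite /It iterS -sa -iterSr.
apply: le_trans (Ef_P a).
by case: (IH (Pop P a)).
Qed.

Lemma Et_le t a : ip pi a a - ip pi a (It P t a) <= t%:R * Ef P pi a.
Proof.
elim: t => [|t IH]; first by rewrite /It /= subrr mul0r.
have := Dd_le t a; rewrite mulrSr; lra.
Qed.

Lemma EfX t a : Ef (P ^+ t) pi a = ip pi a a - ip pi a (It P t a).
Proof. by rewrite /Ef PopX. Qed.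

End Ebounds.

Section Flows.
Variables (R : realType) (n : nat) (Q : 'M[R]_n) (pi : 'I_n -> R).
Hypothesis Qge0 : forall v w, 0 <= Q v w.
Hypothesis Qst : forall v, \sum_w Q v w = 1.
Hypothesis Qrev : reversible Q pi.
Hypothesis pi_gt0 : forall v, 0 < pi v.

Lemma split_le (F : 'I_n -> 'I_n -> R) (v w : 'I_n) : F v v = 0 ->
  (if (v <= w)%N then F v w else 0) + (if (w <= v)%N then F v w else 0) = F v w.
Proof.
move=> h; have [lt|lt|eq] := ltngtP v w.
- by rewrite addr0.
- by rewrite add0r.
- have e : w = v by apply: val_inj.
  by subst; rewrite h addr0.
Qed.

Lemma sym_half (F : 'I_n -> 'I_n -> R) :
  (forall v w, F v w = F w v) -> (forall v, F v v = 0) ->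
  2 * \sum_(v : 'I_n) \sum_(w : 'I_n) (if (v <= w)%N then F v w else 0) = \sum_v \sum_w F v w.
Proof.
move=> sy d0; rewrite mulr2n mulrDl mul1r.
rewrite [X in _ + X]exchange_big /=.
rewrite -big_split /=; apply: eq_bigr => v _; rewrite -big_split /=.
apply: eq_bigr => w _; rewrite (sy w v); exact: split_le.
Qed.

Lemma edge_sum a :
  \sum_v \sum_w (if is_edge Q v w then pi v * Q v w * (a v - a w) ^+ 2 else 0)
  = Ef Q pi a.
Proof.
have -> : \sum_v \sum_w (if is_edge Q v w then pi v * Q v w * (a v - a w) ^+ 2 else 0)
  = \sum_(v : 'I_n) \sum_(w : 'I_n) (if (v <= w)%N then pi v * Q v w * (a v - a w) ^+ 2 else 0).
  apply: eq_bigr => v _; apply: eq_bigr => w _; rewrite /is_edge.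
  case: (v <= w)%N => //=; case: ltrP => // h.
  have -> : Q v w = 0 by apply/eqP; rewrite eq_le h Qge0.
  by rewrite mulr0 mul0r.
apply: (mulfI (x := 2)) => //.
rewrite sym_half; first by rewrite dirichlet.
  by move=> v w; rewrite Qrev -opprB sqrrN.
by move=> v; rewrite subrr expr0n /= mulr0.
Qed.

Lemma flow_sum (g : 'I_n -> 'I_n -> R) psi :
  \sum_v \sum_w g v w * (psi v - psi w) = \sum_v psi v * net_flow g v.
Proof.
rewrite /net_flow.
transitivity (\sum_v \sum_w g v w * psi v - \sum_v \sum_w g v w * psi w).
  rewrite -sumrB; apply: eq_bigr => v _; rewrite -sumrB; apply: eq_bigr => w _; ring.
rewrite [X in _ - X]exchange_big /= -sumrB; apply: eq_bigr => v _.
rewrite mulrBr !mulr_sumr; congr (_ - _); apply: eq_bigr => w _; ring.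
Qed.

Lemma weak_dual (xi : 'I_n -> R) (g : 'I_n -> 'I_n -> R) psi :
  is_flow Q g -> (forall v, net_flow g v = xi v) ->
  2 * (\sum_v psi v * xi v) - Ef Q pi psi <= energy Q pi g.
Proof.
move=> fl nf.
have -> : \sum_v psi v * xi v = \sum_v \sum_w g v w * (psi v - psi w).
  by rewrite flow_sum; apply: eq_bigr => v _; rewrite nf.
rewrite -edge_sum mulr_sumr -sumrB /energy; apply: ler_sum => v _.
rewrite mulr_sumr -sumrB; apply: ler_sum => w _.
case E: (is_edge Q v w); last by rewrite (fl v w) ?E // !(mul0r, mulr0, subr0).
have cpos : 0 < pi v * Q v w by rewrite mulr_gt0 //; case/andP: E.
rewrite /resistance.
set c := pi v * Q v w in cpos *.
set d := psi v - psi w; set x := g v w.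
have cn0 : c != 0 by rewrite gt_eqF.
rewrite -subr_ge0.
have -> : c^-1 * x ^+ 2 - (2 * (x * d) - c * d ^+ 2) = c^-1 * (x - c * d) ^+ 2.
  by field.
by rewrite mulr_ge0 // ?sqr_ge0 // invr_ge0 ltW.
Qed.

Definition flow_of (phi : 'I_n -> R) : 'I_n -> 'I_n -> R :=
  fun v w => if is_edge Q v w then pi v * Q v w * (phi v - phi w) else 0.

Lemma flow_of_flow phi : is_flow Q (flow_of phi).
Proof. by move=> v w /negbTE h; rewrite /flow_of h. Qed.

Lemma flow_of_le phi (v w : 'I_n) : flow_of phi v w =
  if (v <= w)%N then pi v * Q v w * (phi v - phi w) else 0.
Proof.
rewrite /flow_of /is_edge; case: (v <= w)%N => //=; case: ltrP => // h.
have -> : Q v w = 0 by apply/eqP; rewrite eq_le h Qge0.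
by rewrite mulr0 mul0r.
Qed.

Lemma flow_of_net phi v :
  net_flow (flow_of phi) v = pi v * (phi v - Pop Q phi v).
Proof.
rewrite /net_flow.
under eq_bigr => w _ do rewrite flow_of_le.
under [X in _ - X]eq_bigr => u _ do rewrite flow_of_le.
rewrite -sumrN -big_split /=.
transitivity (\sum_w pi v * Q v w * (phi v - phi w)).
  apply: eq_bigr => w _.
  have -> : - (if (w <= v)%N then pi w * Q w v * (phi w - phi v) else 0) =
     (if (w <= v)%N then pi v * Q v w * (phi v - phi w) else 0).
    by case: (w <= v)%N; rewrite ?oppr0 // -Qrev; ring.
  by apply: (split_le (F := fun v w => pi v * Q v w * (phi v - phi w))); rewrite subrr mulr0.
rewrite /Pop mulrBr.
have -> : pi v * phi v = \sum_w pi v * Q v w * phi v.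
  by rewrite -mulr_suml -mulr_sumr Qst mulr1.
rewrite mulr_sumr -sumrB; apply: eq_bigr => w _; ring.
Qed.

Lemma flow_of_energy phi : energy Q pi (flow_of phi) = Ef Q pi phi.
Proof.
rewrite -edge_sum /energy; apply: eq_bigr => v _; apply: eq_bigr => w _.
rewrite /flow_of; case E: (is_edge Q v w) => //.
have cpos : 0 < pi v * Q v w by rewrite mulr_gt0 //; case/andP: E.
rewrite /resistance; field; rewrite -?mulf_neq0 ?gt_eqF //; by case/andP: E.
Qed.
End Flows.

Lemma pos_factors (R : realType) (a b : R) : 0 <= a -> 0 <= b -> 0 < a * b -> 0 < a /\ 0 < b.
Proof.
move=> a0 b0 ab; rewrite !lt_def a0 b0 !andbT; split.
  by apply: contraTneq ab => ->; rewrite mul0r ltxx.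
by apply: contraTneq ab => ->; rewrite mulr0 ltxx.
Qed.

Section Lap.
Variables (R : realType) (n : nat) (P : 'M[R]_n) (pi : 'I_n -> R).
Hypothesis Pge0 : forall v w, 0 <= P v w.
Hypothesis Pst : forall v, \sum_w P v w = 1.
Hypothesis Prev : reversible P pi.
Hypothesis pi_gt0 : forall v, 0 < pi v.
Hypothesis Pirr : irreducible P.

Lemma Ef0_edge u v w : Ef P pi u = 0 -> 0 < P v w -> u v = u w.
Proof.
move=> E0 Pvw.
have h := dirichlet u Pst Prev; rewrite E0 mulr0 in h.
have term0 : forall x y, 0 <= pi x * P x y * (u x - u y) ^+ 2.
  by move=> x y; rewrite mulr_ge0 ?sqr_ge0 // mulr_ge0 // ltW.
have inner_ge0 : forall v, 0 <= \sum_w pi v * P v w * (u v - u w) ^+ 2.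
  by move=> x; apply: sumr_ge0 => y _.
have hv := psumr_eq0P (fun x _ => inner_ge0 x) h (i := v) isT.
have := psumr_eq0P (fun y _ => term0 v y) hv (i := w) isT.
move/eqP; rewrite mulf_eq0 mulf_eq0 (gt_eqF (pi_gt0 v)) (gt_eqF Pvw) /= expf_eq0 /= subr_eq0.
by move/eqP.
Qed.

Lemma Ef0_const u : Ef P pi u = 0 -> forall v w, u v = u w.
Proof.
move=> E0 v w; have [t ht] := Pirr v w.
elim: t w ht => [|t IH] w ht.
  move: ht; rewrite expr0 mxE; case: eqP => [-> //|_]; by rewrite ltxx.
move: ht; rewrite exprSr -mulmxE mxE => ht.
case: (boolP [exists k, 0 < (P ^+ t) v k * P k w]) => [/existsP [k hk] | /existsPn hn].
  have [h1 h2] := pos_factors (PX_ge0 Pge0 _ _ _) (Pge0 _ _) hk.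
  by rewrite (IH k h1); exact: Ef0_edge.
exfalso; move: ht; apply/negP; rewrite -leNgt; apply: sumr_le0 => k _.
by rewrite leNgt hn.
Qed.

Definition Lmx : 'M[R]_n := \matrix_(v, w) (pi v * ((v == w)%:R - P v w)).

Lemma Lmx_apply a v : \sum_w Lmx v w * a w = pi v * (a v - Pop P a v).
Proof.
have h : \sum_w (v == w)%:R * a w = a v.
  rewrite (bigD1 v) //= eqxx mul1r big1 ?addr0 // => u /negbTE.
  by rewrite eq_sym => ->; rewrite mul0r.
rewrite -h /Pop mulrBr !mulr_sumr -sumrB; apply: eq_bigr => w _; rewrite mxE; ring.
Qed.

Lemma Lmx_sym v w : Lmx v w = Lmx w v.
Proof.
rewrite !mxE !mulrBr Prev eq_sym; case: eqP => [->//|_]; by rewrite !mulr0.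
Qed.

Lemma solve_lap (xi : 'I_n -> R) (v0 : 'I_n) : \sum_v xi v = 0 ->
  exists phi : 'I_n -> R, forall v, pi v * (phi v - Pop P phi v) = xi v.
Proof.
move=> xi0.
pose xr : 'rV[R]_n := \row_w xi w.
pose J : 'cV[R]_n := const_mx 1.
pose cr : 'rV[R]_n := const_mx 1.
have LJ : Lmx *m J = 0.
  apply/matrixP => v j; rewrite [RHS]mxE mxE.
  transitivity (\sum_w Lmx v w * 1); first by apply: eq_bigr => w _; rewrite /J !mxE.
  have := Lmx_apply (fun _ => 1) v; rewrite /= => ->; rewrite /Pop.
  under eq_bigr => w _ do rewrite mulr1.
  by rewrite Pst subrr mulr0.
have xJ : xr *m J = 0.
  apply/matrixP => i j; rewrite !mxE.
  under eq_bigr => w _ do rewrite !mxE mulr1.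
  exact: xi0.
have kerL : (kermx Lmx <= cr)%MS.
  apply/row_subP => i.
  set r := row i (kermx Lmx).
  have rL : r *m Lmx = 0 by rewrite /r -row_mul mulmx_ker row0.
  pose u w := r 0 w.
  have hu : forall w, u w - Pop P u w = 0.
    move=> w.
    have : (r *m Lmx) 0 w = 0 by rewrite rL mxE.
    rewrite mxE.
    under eq_bigr => v _ do rewrite Lmx_sym mulrC.
    rewrite Lmx_apply => /eqP; rewrite mulf_eq0 gt_eqF //=; by move/eqP.
  have E0 : Ef P pi u = 0.
    rewrite /Ef /ip -sumrB; apply: big1 => w _.
    by rewrite -mulrBr hu mulr0.
  have -> : r = u v0 *: cr.
    apply/matrixP => i' j; rewrite (ord1 i') [RHS]mxE /cr [const_mx _ _ _]mxE mulr1.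
    exact: (Ef0_const E0 j v0).
  by apply: scalemx_sub; exact: submx_refl.
have rkL : (n - \rank Lmx <= 1)%N.
  rewrite -mxrank_ker; apply: leq_trans (mxrankS kerL) _; exact: rank_leq_row.
have J0 : J != 0.
  apply/negP => /eqP /matrixP /(_ v0 0); rewrite !mxE => /eqP; by rewrite oner_eq0.
have rkJ : (1 <= \rank J)%N by rewrite lt0n mxrank_eq0.
have LsubK : (Lmx <= kermx J)%MS by apply/sub_kermxP.
have KsubL : (kermx J <= Lmx)%MS.
  rewrite -(mxrank_leqif_sup LsubK).2; apply/eqP; apply/anti_leq.
  rewrite mxrankS //= mxrank_ker.
  have := rank_leq_row Lmx; lia.
have xsub : (xr <= Lmx)%MS.
  apply: submx_trans KsubL; exact/sub_kermxP.
have [Dm hD] := submxP xsub.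
exists (fun v => Dm 0 v) => w.
have : xr 0 w = (Dm *m Lmx) 0 w by rewrite hD.
rewrite !mxE => ->.
rewrite -Lmx_apply; apply: eq_bigr => v _; by rewrite Lmx_sym mulrC.
Qed.

End Lap.

Section Spec.
Variable R : realType.
Local Notation C := (R[i]).
Local Notation f := (real_complex R).

Lemma f_real (r : R) : (f r) \is Num.real.
Proof. by apply/complex_realP; exists r. Qed.

Lemma conj_f (r : R) : Num.conj (f r) = f r.
Proof. exact/conj_Creal/f_real. Qed.

Lemma conj_rect (z : C) : Num.conj z = f (complex.Re z) - 'i * f (complex.Im z).
Proof.
rewrite {1}[z]complexE complexiE; apply: conjC_rect; exact: f_real.
Qed.

Lemma Re_sum (I : finType) (F : I -> C) : complex.Re (\sum_i F i) = \sum_i complex.Re (F i).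
Proof. by apply: (big_morph (@complex.Re R)) => //= [[a b] [c d]]. Qed.

Lemma Im_sum (I : finType) (F : I -> C) : complex.Im (\sum_i F i) = \sum_i complex.Im (F i).
Proof. by apply: (big_morph (@complex.Im R)) => //= [[a b] [c d]]. Qed.

Lemma Re_mulf (z : C) (s : R) : complex.Re (z * f s) = complex.Re z * s.
Proof. by case: z => a b /=; rewrite mulr0 subr0. Qed.

Lemma Im_mulf (z : C) (s : R) : complex.Im (z * f s) = complex.Im z * s.
Proof. by case: z => a b /=; rewrite mulr0 add0r. Qed.

Lemma Re_fmul (z : C) (s : R) : complex.Re (f s * z) = s * complex.Re z.
Proof. by case: z => a b /=; rewrite mul0r subr0. Qed.

Lemma Im_fmul (z : C) (s : R) : complex.Im (f s * z) = s * complex.Im z.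
Proof. by case: z => a b /=; rewrite mul0r addr0. Qed.


Local Open Scope sesquilinear_scope.

Lemma mapf_trC m k (A : 'M[R]_(m, k)) : (map_mx f A) ^t* = map_mx f (A^T).
Proof. by apply/matrixP => i j; rewrite !mxE conj_f. Qed.

Lemma trC_mul m k p (A : 'M[C]_(m, k)) (B : 'M[C]_(k, p)) : (A *m B) ^t* = B ^t* *m A ^t*.
Proof. by rewrite trmx_mul map_mxM. Qed.

Lemma gap_quad n (S : 'M[R]_n) (mu : R) (x : 'rV[R]_n) :
  S^T = S ->
  (forall (a : 'rV[R]_n) (r : R), a *m S = r *: a -> mu < r -> (x *m a^T) 0 0 = 0) ->
  (x *m S *m x^T) 0 0 <= mu * (x *m x^T) 0 0.
Proof.
move=> Ssym H.
pose Sc := map_mx f S.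
have Sct : Sc ^t* = Sc by rewrite mapf_trC Ssym.
have Snorm : Sc \is normalmx by apply/normalmxP; rewrite Sct.
have Sherm : Sc \is hermsymmx by apply/is_hermitianmxP; rewrite expr0 scale1r Sct.
set U := spectralmx Sc; set d := spectral_diag Sc.
have Uu : U \is unitarymx := spectral_unitarymx Sc.
have /orthomx_spectralP hS := Snorm.
rewrite -/U -/d invmx_unitary // in hS.
have UUt : U *m U^t* = 1%:M by apply/unitarymxP.
have UtU : U^t* *m U = 1%:M by apply: mulmx1C.
have dreal : forall i, d 0 i \is Num.real.
  by move=> i; apply: (mxOverP (hermitian_spectral_diag_real Sherm)).
have eig : forall i, row i U *m Sc = d 0 i *: row i U.
  move=> i; rewrite -row_mul {1}hS !mulmxA UUt mul1mx.
  by rewrite row_mul row_diag_mx -scalemxAl -rowE.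
pose xc := map_mx f x.
pose y := xc *m U^t*.
have yt : y ^t* = U *m xc ^t* by rewrite trC_mul trmxCK.
have fmx : forall M : 'M[R]_(1,1), f (M 0 0) = (map_mx f M) 0 0.
  by move=> M; rewrite mxE.
have keyA : f ((x *m S *m x^T) 0 0) = \sum_i y 0 i * d 0 i * Num.conj (y 0 i).
  have -> : f ((x *m S *m x^T) 0 0) = (xc *m Sc *m xc ^t*) 0 0.
    by rewrite fmx !map_mxM mapf_trC.
  have -> : xc *m Sc *m xc ^t* = y *m diag_mx d *m y ^t*.
    by rewrite yt /y {1}hS !mulmxA.
  rewrite mul_mx_diag mxE.
  by apply: eq_bigr => i _; rewrite !mxE.
have keyB : f ((x *m x^T) 0 0) = \sum_i y 0 i * Num.conj (y 0 i).
  have -> : f ((x *m x^T) 0 0) = (xc *m xc ^t*) 0 0.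
    by rewrite fmx !map_mxM mapf_trC.
  have -> : xc *m xc ^t* = y *m y ^t*.
    by rewrite yt /y -mulmxA (mulmxA (U ^t*)) UtU mul1mx.
  rewrite mxE.
  by apply: eq_bigr => i _; rewrite !mxE.
have keyC : forall i, mu < complex.Re (d 0 i) -> y 0 i = 0.
  move=> i hmu.
  set r := complex.Re (d 0 i).
  have dE : d 0 i = f r by rewrite /r RRe_real.
  pose a : 'rV[R]_n := \row_k complex.Re (U i k).
  pose b : 'rV[R]_n := \row_k complex.Im (U i k).
  have eqj : forall j, \sum_k U i k * f (S k j) = f r * U i j.
    move=> j; have := congr1 (fun M : 'M[C]_(1, n) => M 0 j) (eig i); rewrite !mxE -dE => <-.
    by apply: eq_bigr => k _; rewrite !mxE.
  have ha : a *m S = r *: a.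
    apply/matrixP => o j; rewrite (ord1 o) !mxE.
    have := congr1 (@complex.Re R) (eqj j); rewrite Re_sum Re_fmul => <-.
    by apply: eq_bigr => k _; rewrite !mxE Re_mulf.
  have hb : b *m S = r *: b.
    apply/matrixP => o j; rewrite (ord1 o) !mxE.
    have := congr1 (@complex.Im R) (eqj j); rewrite Im_sum Im_fmul => <-.
    by apply: eq_bigr => k _; rewrite !mxE Im_mulf.
  have xa := H a r ha hmu; have xb := H b r hb hmu.
  transitivity (f ((x *m a^T) 0 0) - 'i * f ((x *m b^T) 0 0)); last first.
    by rewrite xa xb rmorph0 mulr0 subr0.
  rewrite /y !mxE !rmorph_sum mulr_sumr -sumrB; apply: eq_bigr => k _.
  rewrite !mxE conj_rect !rmorphM /=; ring.
rewrite -lecR rmorphM /= keyA keyB mulr_sumr; apply: ler_sum => i _.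
case: (ltrP mu (complex.Re (d 0 i))) => h.
  by rewrite (keyC i h) !mul0r mulr0.
have dE : d 0 i = f (complex.Re (d 0 i)) by rewrite RRe_real.
rewrite mulrAC [f mu * _]mulrC; apply: ler_wpM2l; first exact: mul_conjC_ge0.
by rewrite dE lecR.
Qed.

End Spec.

Section Main.
Variables (R : realType) (n : nat) (P : 'M[R]_n) (pi : 'I_n -> R).
Hypothesis Pge0 : forall v w, 0 <= P v w.
Hypothesis Pst : forall v, \sum_w P v w = 1.
Hypothesis Prev : reversible P pi.
Hypothesis pi_gt0 : forall v, 0 < pi v.

Lemma EfZ (Q : 'M[R]_n) k a : Ef Q pi (fun v => k * a v) = k ^+ 2 * Ef Q pi a.
Proof. by rewrite /Ef PopZ !ipZl !ipZr; ring. Qed.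

Lemma Ef_xi phi (xi : 'I_n -> R) : (forall v, pi v * (phi v - Pop P phi v) = xi v) ->
  Ef P pi phi = \sum_v phi v * xi v.
Proof.
move=> h; rewrite /Ef /ip -sumrB; apply: eq_bigr => v _; rewrite -h; ring.
Qed.

Lemma Reff_le phi (xi : 'I_n -> R) : (forall v, pi v * (phi v - Pop P phi v) = xi v) ->
  (Reff P pi xi <= (Ef P pi phi)%:E)%E.
Proof.
move=> h; apply: ereal_inf_lbound; exists (flow_of P pi phi) => //.
  split; first exact: flow_of_flow.
  by move=> v; rewrite (flow_of_net Pge0 Pst Prev).
by rewrite (flow_of_energy Pge0 Pst Prev pi_gt0).
Qed.

Lemma Reff_ge t (xi : 'I_n -> R) phi : (1 <= t)%N ->
  (forall v, pi v * (phi v - Pop P phi v) = xi v) ->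
  ((Ef P pi phi / t%:R)%:E <= Reff (P ^+ t) pi xi)%E.
Proof.
move=> t1 h; apply/ereal_infP => _ [g [gfl gnet] <-]; rewrite lee_fin.
have tpos : 0 < t%:R :> R by rewrite ltr0n.
have := weak_dual (PX_ge0 Pge0 t) (PX_st Pst t) (PX_rev Prev t) pi_gt0
   (fun v => t%:R^-1 * phi v) gfl gnet.
apply: le_trans.
rewrite EfZ EfX //.
have hE := Et_le Pge0 Pst Prev pi_gt0 t phi.
have e1 : \sum_v t%:R^-1 * phi v * xi v = t%:R^-1 * Ef P pi phi.
  by rewrite (Ef_xi h) mulr_sumr; apply: eq_bigr => v _; rewrite mulrA.
rewrite e1.
set e := Ef P pi phi in hE e1 *.
set D := ip pi phi phi - ip pi phi (It P t phi) in hE *.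
have ti : t%:R^-1 ^+ 2 * D <= t%:R^-1 * e.
  have h1 : t%:R^-1 ^+ 2 * D <= t%:R^-1 ^+ 2 * (t%:R * e).
    by apply: ler_wpM2l => //; rewrite exprn_ge0 // invr_ge0 ltW.
  apply: (le_trans h1); rewrite le_eqVlt; apply/orP; left; apply/eqP.
  by field; rewrite gt_eqF.
rewrite -subr_ge0.
have -> : 2 * (t%:R^-1 * e) - t%:R^-1 ^+ 2 * D - e / t%:R =
   t%:R^-1 * e - t%:R^-1 ^+ 2 * D by rewrite mulrC; ring.
by rewrite subr_ge0.
Qed.


Hypothesis Pirr : irreducible P.

Lemma Ef_shift a c : Ef P pi (fun v => a v - c) = Ef P pi a.
Proof.
apply: (mulfI (x := 2)) => //; rewrite -!dirichlet //.
by apply: eq_bigr => v _; apply: eq_bigr => w _; congr (_ * _); congr (_ ^+ 2); ring.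
Qed.

Lemma poincare (v0 : 'I_n) (delta : R) (b : 'I_n -> R) :
  spectral_gap P delta -> \sum_v pi v * b v = 0 ->
  delta * ip pi b b <= Ef P pi b.
Proof.
move=> [_ Hgap] b0.
pose s v := Num.sqrt (pi v).
have s_gt0 : forall v, 0 < s v by move=> v; rewrite sqrtr_gt0.
have sn0 : forall v, s v != 0 by move=> v; rewrite gt_eqF.
have s2 : forall v, s v ^+ 2 = pi v by move=> v; rewrite sqr_sqrtr // ltW.
pose S : 'M[R]_n := \matrix_(v, w) (s v * P v w / s w).
pose x : 'rV[R]_n := \row_v (s v * b v).
have Pwv : forall v w, P w v = s v ^+ 2 * P v w / s w ^+ 2.
  move=> v w; rewrite !s2; apply: (mulfI (x := pi w)); first by rewrite gt_eqF.
  by rewrite Prev; field; rewrite gt_eqF.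
have Ssym : S^T = S.
  apply/matrixP => v w; rewrite !mxE Pwv; field; rewrite sn0 /= sn0 //.
have H : forall (a : 'rV[R]_n) (r : R), a *m S = r *: a -> 1 - delta < r ->
    (x *m a^T) 0 0 = 0.
  move=> a r haS hr.
  have haSw : forall w, \sum_v a 0 v * S v w = r * a 0 w.
    by move=> w; have := congr1 (fun M : 'M[R]_(1, n) => M 0 w) haS; rewrite !mxE.
  pose psa v := a 0 v / s v.
  have Ppsa : Pop P psa = (fun w => r * psa w).
    apply: funext => w; rewrite /Pop /psa [RHS]mulrA.
    transitivity ((\sum_v a 0 v * S v w) / s w); last by rewrite haSw.
    rewrite mulr_suml.
    apply: eq_bigr => v _; rewrite mxE Pwv; field; rewrite sn0 /= sn0 //.
  have [->|an0] := eqVneq a 0.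
    by rewrite trmx0 mulmx0 mxE.
  have r1 : 1 <= r.
    rewrite leNgt; apply/negP => rlt1.
    have : eigenvalue P r.
      apply/eigenvalueP; exists (\row_w (a 0 w * s w)).
        apply/matrixP => o w; rewrite (ord1 o) !mxE.
        transitivity ((\sum_v a 0 v * S v w) * s w); last by rewrite haSw mulrA.
        rewrite mulr_suml.
        apply: eq_bigr => v _; rewrite !mxE; field; exact: sn0.
      apply: contra an0 => /eqP /matrixP h; apply/eqP/matrixP => o w.
      have := h o w; rewrite (ord1 o) !mxE => /eqP; rewrite mulf_eq0 (negbTE (sn0 w)) orbF.
      by move/eqP.
    move=> /Hgap /(_ rlt1); lra.
  have E0 : Ef P pi psa = 0.
    apply/eqP; rewrite eq_le Ef_ge0 // andbT.
    rewrite /Ef Ppsa ipZr.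
    have := ip_ge0 psa (fun v => ltW (pi_gt0 v)).
    nra.
  have hc := Ef0_const Pge0 Pst Prev pi_gt0 Pirr E0.
  rewrite !mxE.
  transitivity (\sum_v pi v * b v * psa v0).
    apply: eq_bigr => v _; rewrite !mxE -(hc v v0) /psa -(s2 v); field; exact: sn0.
  by rewrite -mulr_suml b0 mul0r.
have := gap_quad Ssym H.
have exx : (x *m x^T) 0 0 = ip pi b b.
  rewrite mxE /ip; apply: eq_bigr => v _; rewrite !mxE -s2; ring.
have exs : (x *m S *m x^T) 0 0 = ip pi b (Pop P b).
  rewrite -sum_piQ_m mxE.
  under eq_bigr => w _ do rewrite mxE mulr_suml.
  rewrite exchange_big /=; apply: eq_bigr => v _; apply: eq_bigr => w _.
  rewrite !mxE -s2; field; exact: sn0.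
rewrite exx exs /Ef; lra.
Qed.

End Main.

Unset Implicit Arguments.

Theorem lemma3p2 (R : realType) (n : nat) (P : 'M[R]_n) (pi : 'I_n -> R)
    (xi : 'I_n -> R) :
  row_stochastic P -> irreducible P -> stationary_distribution P pi ->
  reversible P pi -> \sum_v xi v = 0 ->
  (forall t : nat, (1 <= t)%N ->
     (Reff P pi xi <= t%:R%:E * Reff (P ^+ t) pi xi)%E) /\
  (forall delta : R, spectral_gap P delta ->
     (Reff P pi xi <= ((\sum_v (xi v / Num.sqrt (pi v)) ^+ 2) / delta)%:E)%E).
Proof.
move=> [Pge0 Pst] Pirr [pi_ge0 [pi_sum pi_stat]] Prev xi0.
have hn : (0 < n)%N.
  rewrite lt0n; apply/eqP => n0; move: pi_sum; rewrite big1 => [/eqP|v _].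
    by rewrite eq_sym oner_eq0.
  by exfalso; case: v => k; rewrite n0.
pose v0 : 'I_n := Ordinal hn.
have stX : forall t w, \sum_v pi v * (P ^+ t) v w = pi w.
  elim => [|t IH] w.
    rewrite expr0 (bigD1 w) //= big1 ?addr0; first by rewrite mxE eqxx mulr1.
    by move=> v /negbTE vw; rewrite mxE vw mulr0.
  rewrite exprSr -mulmxE.
  under eq_bigr => v _ do rewrite mxE mulr_sumr.
  rewrite exchange_big /= -pi_stat; apply: eq_bigr => k _.
  rewrite -IH mulr_suml; apply: eq_bigr => v _; by rewrite mulrA.
have [v1 hv1] : exists v1, 0 < pi v1.
  case: (boolP [exists v, 0 < pi v]) => [/existsP [v hv]|/existsPn hn']; first by exists v.
  exfalso; move: pi_sum; rewrite big1 => [/eqP|v _]; first by rewrite eq_sym oner_eq0.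
  by apply/eqP; rewrite eq_le pi_ge0 andbT leNgt hn'.
have pi_gt0 : forall w, 0 < pi w.
  move=> w; have [t ht] := Pirr v1 w.
  rewrite -(stX t w) (bigD1 v1) //=; apply: ltr_wpDr; last exact: mulr_gt0.
  apply: sumr_ge0 => v _; apply: mulr_ge0 => //; exact: PX_ge0.
have [phi hphi] := solve_lap Pge0 Pst Prev pi_gt0 Pirr v0 xi0.
have Rle := Reff_le Pge0 Pst Prev pi_gt0 hphi.
split.
  move=> t t1; apply: le_trans Rle _.
  have := Reff_ge Pge0 Pst Prev pi_gt0 t1 hphi.
  move/(lee_wpmul2l (x := t%:R%:E)) => h; apply: le_trans (h _); last by rewrite lee_fin ler0n.
  rewrite -EFinM lee_fin mulrC divfK ?lexx // pnatr_eq0 -lt0n //.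
move=> delta hgap; apply: le_trans Rle _; rewrite lee_fin.
have dpos : 0 < delta.
  by case: hgap => [[lam [_ [lam1 lamE]]] _]; lra.
pose m := \sum_v pi v * phi v.
pose b := fun v => phi v - m.
have b0 : \sum_v pi v * b v = 0.
  rewrite /b; under eq_bigr => v _ do rewrite mulrBr.
  by rewrite sumrB -mulr_suml pi_sum mul1r subrr.
have hP := poincare Pge0 Pst Prev pi_gt0 Pirr v0 hgap b0.
rewrite /b Ef_shift // -/b in hP.
have eE : Ef P pi phi = \sum_v b v * xi v.
  rewrite (Ef_xi hphi) /b; under [RHS]eq_bigr => v _ do rewrite mulrBl.
  by rewrite sumrB -mulr_sumr xi0 mulr0 subr0.
set Sx := \sum_v (xi v / Num.sqrt (pi v)) ^+ 2.
have hsum : \sum_v b v * xi v <= delta / 2 * ip pi b b + Sx / delta / 2.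
  rewrite /ip mulr_sumr /Sx !mulr_suml -big_split /=; apply: ler_sum => v _.
  set s := Num.sqrt (pi v).
  have s0 : 0 < s by rewrite sqrtr_gt0.
  have s2 : s ^+ 2 = pi v by rewrite sqr_sqrtr // ltW.
  rewrite -s2 -subr_ge0.
  have -> : delta / 2 * (s ^+ 2 * b v * b v) + (xi v / s) ^+ 2 / delta / 2 - b v * xi v
     = (delta * (s * b v) - xi v / s) ^+ 2 / delta / 2.
    by field; rewrite !gt_eqF.
  apply: mulr_ge0; last by rewrite invr_ge0.
  by apply: mulr_ge0; [exact: sqr_ge0 | rewrite invr_ge0 ltW].
move: eE hsum hP; set e := Ef _ _ _ => eE hsum hP. rewrite eE.
have : Sx / delta = 2 * (Sx / delta / 2) by rewrite [RHS]mulrC divfK // pnatr_eq0.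
lra.
Qed.
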